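(* Let $a,b,c\in\mathbb R$ with $0<b<2$, $b\ne1$ and $c\ne0$, and let $\alpha(n)=n^a\exp(c\,n^b)$ for $n\ge1$. Set $\kappa:=\operatorname{sgn}(b(b-1)c)$. Define $$A(n):=-\frac an+bc\,n^{b-1},\qquad \delta(n):=\left(\kappa\left(-\frac{a}{2n^2}+\frac{b(b-1)c}{2n^{2-b}}\right)\right)^{1/2}.$$ The quantity under the square root is positive for all sufficiently large $n$. Then, for every degree $m\ge2$, the sequence $\alpha$ is log-polynomial with data $\{A(n),\kappa,\delta(n)\}$.
   Context: Log-polynomial: let $m\ge2$ be an integer and $\kappa\in\{1,-1\}$. A sequence of positive reals $\alpha(n)$ is log-polynomial of degree $m$ with data $\{A(n),\kappa,\delta(n)\}$ if there are real sequences $A(n),\delta(n),g_k(n)$ ($3\le k\le m$) such that $$\log\left(\frac{\alpha(n+j)}{\alpha(n)}\right)=A(n)j+\kappa\delta(n)^2j^2+\sum_{k=3}^m g_k(n)j^k+o(\delta(n)^{m+1})\quad(n\to\infty)$$ for $j=1,\dots,m+1$. In addition, $\delta(n)>0$ (for all large $n$), $\delta(n)\to0$ and $g_k(n)=o(\delta(n)^k)$. *)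

(* Defs.v *)
From Stdlib Require Import Reals Lra Lia List.
Open Scope R_scope.

Definition little_o (u v : nat -> R) : Prop :=
  forall eps : R, 0 < eps ->
    exists N : nat, forall n : nat, (N <= n)%nat -> Rabs (u n) <= eps * Rabs (v n).

Definition tends_to_0 (u : nat -> R) : Prop :=
  forall eps : R, 0 < eps ->
    exists N : nat, forall n : nat, (N <= n)%nat -> Rabs (u n) < eps.

(* \sum_{k=3}^{m} f k  (empty sum = 0 when m < 3) *)
Definition sum_3_to (m : nat) (f : nat -> R) : R :=
  fold_right Rplus 0 (map f (seq 3 (m - 2))).

Definition log_polynomial (m : nat) (alpha A delta : nat -> R) (kappa : R) : Prop :=
  (2 <= m)%nat /\
  (kappa = 1 \/ kappa = -1) /\
  (forall n : nat, (1 <= n)%nat -> 0 < alpha n) /\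
  (exists N : nat, forall n : nat, (N <= n)%nat -> 0 < delta n) /\
  tends_to_0 delta /\
  exists g : nat -> nat -> R,
    (forall k : nat, (3 <= k <= m)%nat -> little_o (g k) (fun n => delta n ^ k)) /\
    (forall j : nat, (1 <= j <= m + 1)%nat ->
       little_o
         (fun n => ln (alpha (n + j)%nat / alpha n)
                   - (A n * INR j + kappa * delta n ^ 2 * INR j ^ 2
                      + sum_3_to m (fun k => g k n * INR j ^ k)))
         (fun n => delta n ^ (m + 1))).

Definition sgn (x : R) : R :=
  if Rlt_dec 0 x then 1 else if Rlt_dec x 0 then -1 else 0.

Definition alpha_abc (a b c : R) (n : nat) : R :=
  Rpower (INR n) a * exp (c * Rpower (INR n) b).

Definition kappa_abc (a b c : R) : R := sgn (b * (b - 1) * c).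

Definition A_abc (a b c : R) (n : nat) : R :=
  a / INR n + b * c * Rpower (INR n) (b - 1).

Definition delta_sq_abc (a b c : R) (n : nat) : R :=
  kappa_abc a b c * (- a / (2 * INR n ^ 2) + b * (b - 1) * c / (2 * Rpower (INR n) (2 - b))).

Definition delta_abc (a b c : R) (n : nat) : R := sqrt (delta_sq_abc a b c n).

(* Main.v *)
Require Import Defs.
From Stdlib Require Import Reals.
From Coquelicot Require Import Coquelicot.
From Stdlib Require Import Lra Lia List.
Open Scope R_scope.


Fixpoint P (k : nat) (e : R) : R :=
  match k with O => 1 | S k' => P k' e * (e - INR k') end.

Lemma exp_le_mono x y : x <= y -> exp x <= exp y.
Proof. intros [H|H]; [left; apply exp_increasing; exact H| rewrite H; lra]. Qed.

Lemma step_deriv (f : R -> R) k C d :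
  (forall x, -1 < x -> Derive_n f k x = C * Rpower (1+x) d) ->
  forall x, -1 < x -> Derive_n f (S k) x = C * d * Rpower (1+x) (d-1)
     /\ ex_derive_n f (S k) x.
Proof.
  intros H x Hx.
  assert (Hl : locally x (fun t => C * Rpower (1+t) d = Derive_n f k t)).
  { apply (locally_open (fun t => -1 < t)). apply open_gt.
    intros t Ht. rewrite H; auto. exact Hx. }
  assert (Hd : is_derive (fun t => C * Rpower (1+t) d) x (C * d * Rpower (1+x) (d-1))).
  { replace (C * d * Rpower (1+x) (d-1)) with (C * (1 * (d * Rpower (1+x) (d-1)))) by ring.
    apply is_derive_scal.
    apply (is_derive_comp (fun t => Rpower t d) (fun t => 1 + t)).
    - apply is_derive_Reals. apply derivable_pt_lim_power. lra.
    - auto_derive; auto; ring. }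
  split.
  - simpl. rewrite <- (Derive_ext_loc _ _ _ Hl). apply is_derive_unique. exact Hd.
  - simpl. apply (ex_derive_ext_loc _ _ _ Hl). eexists. exact Hd.
Qed.

Definition hpow (e : R) (x : R) := Rpower (1+x) e.

Lemma hpow_deriv e k : forall x, -1 < x ->
  Derive_n (hpow e) k x = P k e * Rpower (1+x) (e - INR k) /\ ex_derive_n (hpow e) k x.
Proof.
  induction k; intros x Hx.
  - simpl. unfold hpow. split; [ring_simplify (e - 0); ring | exact I].
  - destruct (step_deriv (hpow e) k (P k e) (e - INR k)) with x as [H1 H2]; auto.
    intros; apply IHk; auto.
    split; auto. rewrite H1. rewrite S_INR. simpl P.
    replace (e - (INR k + 1)) with (e - INR k - 1) by ring. ring.
Qed.

Definition lnp (x : R) := ln (1+x).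

Lemma lnp_deriv k : forall x, -1 < x ->
  Derive_n lnp (S k) x = P k (-1) * Rpower (1+x) (-1 - INR k) /\ ex_derive_n lnp (S k) x.
Proof.
  induction k; intros x Hx.
  - assert (Hd : is_derive lnp x (/ (1+x))).
    { unfold lnp. replace (/ (1+x)) with (1 * / (1+x)) by ring.
      apply (is_derive_comp ln (fun t => 1 + t)).
      - apply is_derive_Reals. apply derivable_pt_lim_ln. lra.
      - auto_derive; auto; ring. }
    change (Derive_n lnp 1 x) with (Derive lnp x).
    change (ex_derive_n lnp 1 x) with (ex_derive lnp x). simpl INR. split.
    + rewrite (is_derive_unique _ _ _ Hd).
      replace (-1 - 0) with (- (1)) by ring. rewrite Rpower_Ropp, Rpower_1 by lra. simpl; ring.
    + eexists; exact Hd.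
  - destruct (step_deriv lnp (S k) (P k (-1)) (-1 - INR k)) with x as [H1 H2]; auto.
    intros; apply IHk; auto.
    split; auto. rewrite H1. rewrite (S_INR k). simpl P.
    replace (-1 - (INR k + 1)) with (-1 - INR k - 1) by ring. ring.
Qed.

Lemma lnp_exd k x : -1 < x -> ex_derive_n lnp k x.
Proof. destruct k. intros; exact I. intros; apply lnp_deriv; auto. Qed.

Lemma Rpower_bound (z E : R) : 0 <= z <= 1 -> Rabs (Rpower (1+z) E) <= exp (Rabs E).
Proof.
  intros Hz. unfold Rpower. rewrite Rabs_pos_eq by (left; apply exp_pos).
  apply exp_le_mono.
  assert (0 <= ln (1+z)).
  { apply Rle_trans with (ln 1); [rewrite ln_1; lra|]. apply ln_le; lra. }
  assert (ln (1+z) <= 1).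
  { apply Rle_trans with (ln (exp 1)); [|rewrite ln_exp; lra].
    apply ln_le. lra. pose proof (exp_ineq1_le 1). lra. }
  destruct (Rle_dec 0 E).
  - rewrite Rabs_pos_eq by auto. nra.
  - rewrite Rabs_left by lra. nra.
Qed.

Lemma taylor_bound (f : R -> R) m D E :
  (forall k x, -1 < x -> ex_derive_n f k x) ->
  (forall x, -1 < x -> Derive_n f (S m) x = D * Rpower (1+x) E) ->
  forall x, 0 < x <= 1 ->
  Rabs (f x - sum_f_R0 (fun k => x ^ k / INR (Factorial.fact k) * Derive_n f k 0) m)
    <= Rabs D * exp (Rabs E) * x ^ (S m).
Proof.
  intros Hex HD x Hx.
  destruct (Taylor_Lagrange f m 0 x) as [z [Hz Heq]]. lra.
  intros; apply Hex; lra.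
  rewrite Heq.
  replace (x - 0) with x by ring.
  set (S0 := sum_f_R0 _ m).
  replace (S0 + x ^ S m / INR (Factorial.fact (S m)) * Derive_n f (S m) z - S0)
    with (x ^ S m / INR (Factorial.fact (S m)) * Derive_n f (S m) z) by ring.
  rewrite HD by lra.
  pose proof (Rpower_bound z E ltac:(lra)).
  assert (Hf : 1 <= INR (Factorial.fact (S m))).
  { apply (le_INR 1). pose proof (Factorial.lt_O_fact (S m)). lia. }
  assert (Hx0 : 0 < x ^ S m) by (apply pow_lt; lra).
  rewrite !Rabs_mult. rewrite Rabs_div by lra.
  rewrite (Rabs_pos_eq (x ^ S m)) by lra. rewrite (Rabs_pos_eq (INR _)) by lra.
  assert (0 <= Rabs D) by apply Rabs_pos.
  assert (x ^ S m / INR (Factorial.fact (S m)) <= x ^ S m).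
  { unfold Rdiv. rewrite <- (Rmult_1_r (x ^ S m)) at 2. apply Rmult_le_compat_l; [lra|].
    rewrite <- Rinv_1. apply Rinv_le_contravar; lra. }
  assert (0 <= x ^ S m / INR (Factorial.fact (S m))).
  { apply Rdiv_le_0_compat; lra. }
  assert (0 <= Rabs (Rpower (1 + z) E)) by apply Rabs_pos.
  apply Rle_trans with (x ^ S m * (Rabs D * exp (Rabs E))).
  - apply Rmult_le_compat; [lra| apply Rmult_le_pos; lra | lra |].
    apply Rmult_le_compat_l; lra.
  - lra.
Qed.




Lemma Rpower_pos x e : 0 < Rpower x e.
Proof. unfold Rpower; apply exp_pos. Qed.

Lemma Rpower_pow' x e k : 0 < x -> (Rpower x e) ^ k = Rpower x (e * INR k).
Proof. intros Hx. rewrite <- Rpower_pow by apply Rpower_pos. apply Rpower_mult. Qed.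

Lemma Rpower_mono_exp x e1 e2 : 1 <= x -> e1 <= e2 -> Rpower x e1 <= Rpower x e2.
Proof.
  intros Hx He. unfold Rpower. apply exp_le_mono.
  assert (0 <= ln x) by (apply Rle_trans with (ln 1); [rewrite ln_1; lra| apply ln_le; lra]).
  nra.
Qed.

Lemma ev_Rpower p M : 0 < p -> exists N0, forall n, (N0 <= n)%nat -> M <= Rpower (INR n) p.
Proof.
  intros Hp. destruct (INR_unbounded (exp (M / p))) as [N0 HN0].
  exists N0. intros n Hn.
  assert (HN : INR N0 <= INR n) by (apply le_INR; lia).
  assert (Hpos : 0 < INR n) by (pose proof (exp_pos (M/p)); lra).
  assert (ln (exp (M/p)) <= ln (INR n)) by (apply ln_le; [apply exp_pos| lra]).
  rewrite ln_exp in H.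
  unfold Rpower. apply Rle_trans with (exp M).
  - pose proof (exp_ineq1_le M). lra.
  - apply exp_le_mono.
    replace M with (p * (M / p)) at 1 by (field; lra).
    apply Rmult_le_compat_l; lra.
Qed.

Lemma ev_max (Q1 Q2 : nat -> Prop) :
  (exists N, forall n, (N <= n)%nat -> Q1 n) -> (exists N, forall n, (N <= n)%nat -> Q2 n) ->
  exists N, forall n, (N <= n)%nat -> Q1 n /\ Q2 n.
Proof.
  intros [N1 H1] [N2 H2]. exists (Nat.max N1 N2). intros n Hn; split; [apply H1|apply H2]; lia.
Qed.

Lemma ev_ge1 : exists N, forall n, (N <= n)%nat -> 1 <= INR n.
Proof. exists 1%nat. intros n Hn. apply (le_INR 1); lia. Qed.

Lemma kappa_prop a b c : b * (b - 1) * c <> 0 ->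
  (kappa_abc a b c = 1 \/ kappa_abc a b c = -1) /\
  kappa_abc a b c * (b * (b - 1) * c) = Rabs (b * (b - 1) * c) /\
  kappa_abc a b c * kappa_abc a b c = 1.
Proof.
  intros Hs. unfold kappa_abc, sgn.
  destruct (Rlt_dec 0 (b * (b - 1) * c)).
  - rewrite Rabs_pos_eq by lra. lra.
  - destruct (Rlt_dec (b * (b - 1) * c) 0).
    + rewrite Rabs_left by lra. lra.
    + lra.
Qed.

Lemma ds_eq a b c n : (1 <= n)%nat ->
  delta_sq_abc a b c n =
  kappa_abc a b c * (-a) / 2 * Rpower (INR n) (-2)
  + kappa_abc a b c * (b * (b - 1) * c) / 2 * Rpower (INR n) (b - 2).
Proof.
  intros Hn. assert (HN : 0 < INR n) by (apply lt_0_INR; lia).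
  unfold delta_sq_abc.
  replace (-2) with (- INR 2) by (simpl; ring).
  replace (b - 2) with (- (2 - b)) by ring.
  rewrite !Rpower_Ropp, Rpower_pow by lra.
  assert (0 < Rpower (INR n) (2 - b)) by apply Rpower_pos.
  field. split; lra.
Qed.

Lemma ds_lower a b c : 0 < b -> b * (b - 1) * c <> 0 ->
  exists N, forall n, (N <= n)%nat ->
    (1 <= n)%nat /\ Rabs (b * (b - 1) * c) / 4 * Rpower (INR n) (b - 2) <= delta_sq_abc a b c n.
Proof.
  intros Hb Hs. set (s := b * (b - 1) * c) in *.
  assert (Has : 0 < Rabs s) by (apply Rabs_pos_lt; auto).
  destruct (ev_Rpower b (2 * Rabs a / Rabs s) Hb) as [N1 H1].
  exists (Nat.max 1 N1). intros n Hn. split; [lia|].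
  assert (HN : 0 < INR n) by (apply lt_0_INR; lia).
  rewrite ds_eq by lia.
  destruct (kappa_prop a b c Hs) as [Hk [Hks Hkk]]. fold s in Hks.
  replace (kappa_abc a b c * s) with (Rabs s) by (rewrite Hks; auto).
  replace (b - 2) with (b + -2) by ring. rewrite Rpower_plus.
  pose proof (H1 n ltac:(lia)) as HM.
  assert (HR2 : 0 < Rpower (INR n) (-2)) by apply Rpower_pos.
  assert (HRb : 2 * Rabs a <= Rabs s * Rpower (INR n) b).
  { apply Rmult_le_compat_l with (r := Rabs s) in HM; [|lra].
    replace (Rabs s * (2 * Rabs a / Rabs s)) with (2 * Rabs a) in HM by (field; lra). lra. }
  assert (Hka : -(Rabs a) <= kappa_abc a b c * - a).
  { pose proof (Rle_abs a). pose proof (Rle_abs (-a)). rewrite Rabs_Ropp in *.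
    destruct Hk as [-> | ->]; lra. }
  assert (0 <= Rabs a) by apply Rabs_pos.
  assert (0 <= kappa_abc a b c * - a / 2 + Rabs s / 4 * Rpower (INR n) b) by lra.
  assert (0 <= Rpower (INR n) (-2) * (kappa_abc a b c * - a / 2 + Rabs s / 4 * Rpower (INR n) b)) by (apply Rmult_le_pos; lra).
  fold s. rewrite Hks. nra.
Qed.

Lemma key a b c (q : nat) (u : nat -> R) (C : R) :
  0 < b -> b * (b - 1) * c <> 0 -> (3 <= q)%nat ->
  (exists N, forall n, (N <= n)%nat -> Rabs (u n) <= C * Rpower (INR n) (b - INR q)) ->
  little_o u (fun n => delta_abc a b c n ^ q).
Proof.
  intros Hb Hs Hq [N3 H3] eps Heps.
  destruct (ds_lower a b c Hb Hs) as [N1 H1].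
  set (D := Rabs (b * (b - 1) * c) / 4) in *.
  assert (HD : 0 < D) by (unfold D; pose proof (Rabs_pos_lt _ Hs); lra).
  assert (Hq2 : 0 < b * (INR q - 2)).
  { apply Rmult_lt_0_compat; auto. apply le_INR in Hq. simpl in Hq. lra. }
  destruct (ev_Rpower _ (C ^ 2 / (eps ^ 2 * D ^ q)) Hq2) as [N2 H2].
  exists (Nat.max N1 (Nat.max N2 N3)). intros n Hn.
  destruct (H1 n ltac:(lia)) as [Hn1 Hds].
  specialize (H2 n ltac:(lia)). specialize (H3 n ltac:(lia)).
  assert (HN : 0 < INR n) by (apply lt_0_INR; lia).
  set (X := Rpower (INR n) (b - 2)) in *.
  assert (HX : 0 < X) by apply Rpower_pos.
  set (dd := delta_abc a b c n).
  assert (Hdd : dd ^ 2 = delta_sq_abc a b c n).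
  { unfold dd, delta_abc. simpl. rewrite Rmult_1_r. apply sqrt_sqrt.
    apply Rle_trans with (D * X); [|exact Hds]. apply Rmult_le_pos; lra. }
  set (Y := C * Rpower (INR n) (b - INR q)) in *.
  assert (HY0 : 0 <= Y) by (pose proof (Rabs_pos (u n)); lra).
  assert (HZ : Y ^ 2 <= (eps * Rabs (dd ^ q)) ^ 2).
  { rewrite Rpow_mult_distr. rewrite <- RPow_abs, <- pow_mult, Nat.mul_comm, pow_mult.
    rewrite pow2_abs.
    rewrite Hdd.
    assert (Hp : (D * X) ^ q <= delta_sq_abc a b c n ^ q).
    { apply pow_incr. split; [apply Rmult_le_pos; lra| exact Hds]. }
    rewrite Rpow_mult_distr in Hp. unfold X in Hp. rewrite Rpower_pow' in Hp by lra.
    unfold Y. rewrite Rpow_mult_distr, Rpower_pow' by lra.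
    replace ((b - 2) * INR q) with ((b - INR q) * INR 2 + b * (INR q - 2)) in Hp
      by (simpl; ring).
    rewrite Rpower_plus in Hp.
    set (W := Rpower (INR n) ((b - INR q) * INR 2)) in *.
    set (V := Rpower (INR n) (b * (INR q - 2))) in *.
    assert (0 < W) by apply Rpower_pos.
    assert (0 < D ^ q) by (apply pow_lt; lra).
    assert (0 < eps ^ 2) by (apply pow_lt; lra).
    assert (HC : C ^ 2 <= eps ^ 2 * D ^ q * V).
    { apply Rmult_le_compat_l with (r := eps ^ 2 * D ^ q) in H2; [|nra].
      replace (eps ^ 2 * D ^ q * (C ^ 2 / (eps ^ 2 * D ^ q))) with (C ^ 2) in H2
        by (field; split; lra). lra. }
    apply Rle_trans with (eps ^ 2 * (D ^ q * (W * V))); [|apply Rmult_le_compat_l; lra].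
    nra. }
  assert (0 <= eps * Rabs (dd ^ q)) by (apply Rmult_le_pos; [lra|apply Rabs_pos]).
  apply Rle_trans with Y; auto.
  nra.
Qed.


Definition DL (k : nat) : R := match k with O => 0 | S k' => P k' (-1) end.

Definition G (a b c : R) (k n : nat) : R :=
  (a * DL k * Rpower (INR n) (- INR k) + c * P k b * Rpower (INR n) (b - INR k))
  / INR (Factorial.fact k).

Lemma Rpower_1_base y : Rpower 1 y = 1.
Proof. unfold Rpower. rewrite ln_1, Rmult_0_r. apply exp_0. Qed.

Lemma lnp_0 k : Derive_n lnp k 0 = DL k.
Proof.
  destruct k.
  - simpl. unfold lnp. rewrite Rplus_0_r. apply ln_1.
  - destruct (lnp_deriv k 0) as [H _]. lra. rewrite H, Rplus_0_r, Rpower_1_base. simpl. ring.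
Qed.

Lemma hpow_0 b k : Derive_n (hpow b) k 0 = P k b.
Proof.
  destruct (hpow_deriv b k 0) as [H _]. lra. rewrite H, Rplus_0_r, Rpower_1_base. ring.
Qed.

Lemma sum_lin (u v : nat -> R) al be m :
  sum_f_R0 (fun k => al * u k + be * v k) m = al * sum_f_R0 u m + be * sum_f_R0 v m.
Proof. induction m; simpl; [ring| rewrite IHm; ring]. Qed.

Lemma sum_split (F : nat -> R) m : (2 <= m)%nat ->
  sum_f_R0 F m = F 0%nat + F 1%nat + F 2%nat + sum_3_to m F.
Proof.
  intros Hm. induction Hm.
  - unfold sum_3_to. simpl. lra.
  - simpl sum_f_R0. rewrite IHHm. unfold sum_3_to.
    replace (S m - 2)%nat with (S (m - 2)) by lia.
    rewrite seq_S, map_app, fold_right_app. simpl.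
    replace (S (S (S (m - 2)))) with (S m) by lia.
    assert (forall l z, fold_right Rplus z (map F l) = z + fold_right Rplus 0 (map F l)).
    { induction l; intros z; simpl; [ring| rewrite IHl; ring]. }
    rewrite (H _ (F (S m) + 0)). lra.
Qed.

Lemma ln_ratio a b c n j : (1 <= n)%nat ->
  ln (alpha_abc a b c (n + j) / alpha_abc a b c n) =
  a * lnp (INR j / INR n) + c * Rpower (INR n) b * (hpow b (INR j / INR n) - 1).
Proof.
  intros Hn. assert (HN : 0 < INR n) by (apply lt_0_INR; lia).
  assert (HJ : 0 <= INR j) by apply pos_INR.
  unfold alpha_abc, lnp, hpow. rewrite plus_INR.
  assert (E : INR n + INR j = INR n * (1 + INR j / INR n)) by (field; lra).
  assert (Hx : 0 < 1 + INR j / INR n) by (pose proof (Rdiv_le_0_compat _ _ HJ HN); lra).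
  rewrite ln_div by (apply Rmult_lt_0_compat; [apply Rpower_pos|apply exp_pos]).
  rewrite !ln_mult by (try apply Rpower_pos; apply exp_pos).
  rewrite !ln_exp. unfold Rpower at 1 3. rewrite !ln_exp.
  rewrite E, ln_mult by lra.
  rewrite <- Rpower_mult_distr by lra. ring.
Qed.

Lemma term_eq a b c n j k : (1 <= n)%nat ->
  (INR j / INR n) ^ k / INR (Factorial.fact k) * (a * DL k + c * Rpower (INR n) b * P k b)
  = G a b c k n * INR j ^ k.
Proof.
  intros Hn. assert (HN : 0 < INR n) by (apply lt_0_INR; lia).
  unfold G. replace (b - INR k) with (b + - INR k) by ring.
  rewrite Rpower_plus, Rpower_Ropp, Rpower_pow by lra.
  assert (INR (Factorial.fact k) <> 0) by (apply not_0_INR; apply Factorial.fact_neq_0).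
  unfold Rdiv. rewrite Rpow_mult_distr, pow_inv. field. split; auto. apply pow_nonzero; lra.
Qed.


Lemma G0_eq a b c n : G a b c 0 n = c * Rpower (INR n) b.
Proof.
  unfold G. simpl DL. simpl P. simpl INR. replace (b - 0) with b by ring.
  simpl Factorial.fact. simpl INR. field.
Qed.

Lemma G1_eq a b c n : (1 <= n)%nat -> G a b c 1 n = A_abc a b c n.
Proof.
  intros Hn. assert (HN : 0 < INR n) by (apply lt_0_INR; lia).
  unfold G, A_abc. simpl DL. simpl P. simpl Factorial.fact. simpl INR.
  rewrite Rpower_Ropp, Rpower_1 by lra. field. lra.
Qed.

Lemma G2_eq a b c n : (1 <= n)%nat -> b * (b - 1) * c <> 0 -> 0 <= delta_sq_abc a b c n ->
  kappa_abc a b c * delta_abc a b c n ^ 2 = G a b c 2 n.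
Proof.
  intros Hn Hs Hd. assert (HN : 0 < INR n) by (apply lt_0_INR; lia).
  unfold delta_abc. simpl pow. rewrite Rmult_1_r, sqrt_sqrt by auto.
  rewrite ds_eq by auto.
  destruct (kappa_prop a b c Hs) as [_ [_ Hkk]].
  unfold G. replace (INR 2) with 2 by (simpl; ring).
  replace (INR (Factorial.fact 2)) with 2 by (simpl; ring).
  replace (DL 2) with (-1) by (simpl; ring).
  replace (P 2 b) with (b * (b - 1)) by (simpl; ring).
  set (k := kappa_abc a b c).
  transitivity ((k * k) * ((-a)/2 * Rpower (INR n) (-2) + b * (b-1) * c / 2 * Rpower (INR n) (b - 2))).
  - field.
  - unfold k; rewrite Hkk. replace (- (2)) with (-2) by ring. field.
Qed.

Lemma ds_upper a b c n : (1 <= n)%nat -> 0 < b -> b * (b - 1) * c <> 0 ->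
  delta_sq_abc a b c n <= (Rabs a / 2 + Rabs (b * (b - 1) * c) / 2) * Rpower (INR n) (b - 2).
Proof.
  intros Hn Hb Hs. assert (HN : 1 <= INR n) by (apply (le_INR 1); lia).
  rewrite ds_eq by auto.
  destruct (kappa_prop a b c Hs) as [Hk [Hks _]].
  rewrite Hks.
  assert (Hka : kappa_abc a b c * - a <= Rabs a).
  { pose proof (Rle_abs a). pose proof (Rle_abs (-a)). rewrite Rabs_Ropp in *.
    destruct Hk as [-> | ->]; lra. }
  assert (H2 : Rpower (INR n) (-2) <= Rpower (INR n) (b-2)) by (apply Rpower_mono_exp; lra).
  assert (0 < Rpower (INR n) (-2)) by apply Rpower_pos.
  assert (0 <= Rabs a) by apply Rabs_pos.
  assert (kappa_abc a b c * - a * Rpower (INR n) (-2) <= Rabs a * Rpower (INR n) (-2))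
    by (apply Rmult_le_compat_r; lra).
  assert (Rabs a * Rpower (INR n) (-2) <= Rabs a * Rpower (INR n) (b-2))
    by (apply Rmult_le_compat_l; lra).
  unfold Rdiv. lra.
Qed.

Lemma G_bound a b c k n : (1 <= n)%nat -> 0 < b ->
  Rabs (G a b c k n) <= (Rabs (a * DL k) + Rabs (c * P k b)) / INR (Factorial.fact k)
                          * Rpower (INR n) (b - INR k).
Proof.
  intros Hn Hb. assert (HN : 1 <= INR n) by (apply (le_INR 1); lia).
  assert (Hf : 0 < INR (Factorial.fact k)) by (apply lt_0_INR; apply Factorial.lt_O_fact).
  assert (H2 : Rpower (INR n) (- INR k) <= Rpower (INR n) (b - INR k)) by (apply Rpower_mono_exp; lra).
  pose proof (Rpower_pos (INR n) (- INR k)). pose proof (Rpower_pos (INR n) (b - INR k)).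
  unfold G. rewrite Rabs_div by lra. rewrite (Rabs_pos_eq (INR _)) by lra.
  assert (HQ : Rabs (a * DL k * Rpower (INR n) (- INR k) + c * P k b * Rpower (INR n) (b - INR k))
     <= (Rabs (a * DL k) + Rabs (c * P k b)) * Rpower (INR n) (b - INR k)).
  { eapply Rle_trans; [apply Rabs_triang|].
    rewrite !(Rabs_mult (_ * _) (Rpower _ _)).
    rewrite (Rabs_pos_eq (Rpower _ (- _))), (Rabs_pos_eq (Rpower _ (b - _))) by lra.
    pose proof (Rabs_pos (a * DL k)). pose proof (Rabs_pos (c * P k b)).
    assert (Rabs (a * DL k) * Rpower (INR n) (- INR k) <= Rabs (a * DL k) * Rpower (INR n) (b - INR k))
      by (apply Rmult_le_compat_l; lra).
    lra. }
  replace ((Rabs (a * DL k) + Rabs (c * P k b)) / INR (Factorial.fact k) * Rpower (INR n) (b - INR k))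
    with ((Rabs (a * DL k) + Rabs (c * P k b)) * Rpower (INR n) (b - INR k) / INR (Factorial.fact k))
    by (field; lra).
  unfold Rdiv. apply Rmult_le_compat_r; [left; apply Rinv_0_lt_compat; lra| exact HQ].
Qed.


Definition R1 m (x : R) := lnp x - sum_f_R0 (fun k => x ^ k / INR (Factorial.fact k) * Derive_n lnp k 0) m.
Definition R2 b m (x : R) := hpow b x - sum_f_R0 (fun k => x ^ k / INR (Factorial.fact k) * Derive_n (hpow b) k 0) m.

Lemma resid_eq a b c m n j : (2 <= m)%nat -> (1 <= n)%nat -> b * (b - 1) * c <> 0 ->
  0 <= delta_sq_abc a b c n ->
  ln (alpha_abc a b c (n + j) / alpha_abc a b c n)
  - (A_abc a b c n * INR j + kappa_abc a b c * delta_abc a b c n ^ 2 * INR j ^ 2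
     + sum_3_to m (fun k => G a b c k n * INR j ^ k))
  = a * R1 m (INR j / INR n) + c * Rpower (INR n) b * R2 b m (INR j / INR n).
Proof.
  intros Hm Hn Hs Hd.
  rewrite ln_ratio by auto.
  assert (HT : a * sum_f_R0 (fun k => (INR j / INR n) ^ k / INR (Factorial.fact k) * Derive_n lnp k 0) m
             + c * Rpower (INR n) b * sum_f_R0 (fun k => (INR j / INR n) ^ k / INR (Factorial.fact k) * Derive_n (hpow b) k 0) m
             = sum_f_R0 (fun k => G a b c k n * INR j ^ k) m).
  { rewrite <- sum_lin. apply sum_eq. intros k _.
    rewrite lnp_0, hpow_0, <- term_eq by auto.
    set (x := INR j / INR n). unfold Rdiv. ring. }
  rewrite (sum_split (fun k => G a b c k n * INR j ^ k)) in HT by auto. cbv beta in HT.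
  rewrite G0_eq, G1_eq, <- G2_eq in HT by auto.
  unfold R1, R2. rewrite pow_1 in HT. lra.
Qed.

Lemma resid_bound a b c m : 0 < b -> exists C, forall n j, (1 <= j <= m + 1)%nat -> (m + 1 <= n)%nat ->
  Rabs (a * R1 m (INR j / INR n) + c * Rpower (INR n) b * R2 b m (INR j / INR n))
  <= C * Rpower (INR n) (b - INR (m + 1)).
Proof.
  intros Hb.
  set (B1 := Rabs (P m (-1)) * exp (Rabs (-1 - INR m))).
  set (B2 := Rabs (P (S m) b) * exp (Rabs (b - INR (S m)))).
  set (Jm := INR (S m) ^ (S m)).
  exists ((Rabs a * B1 + Rabs c * B2) * Jm).
  intros n j Hj Hn.
  replace (m + 1)%nat with (S m) in * by lia.
  assert (HN : 0 < INR n) by (apply lt_0_INR; lia).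
  assert (HN1 : 1 <= INR n) by (apply (le_INR 1); lia).
  assert (HJ1 : 1 <= INR j) by (apply (le_INR 1); lia).
  assert (HJN : INR j <= INR n) by (apply le_INR; lia).
  assert (HJm : INR j <= INR (S m)) by (apply le_INR; lia).
  set (x := INR j / INR n).
  assert (Hx : 0 < x <= 1).
  { unfold x. split. apply Rdiv_lt_0_compat; lra.
    apply Rmult_le_reg_r with (INR n); [lra|]. unfold Rdiv. rewrite Rmult_assoc, Rinv_l; lra. }
  assert (HR1 : Rabs (R1 m x) <= B1 * x ^ S m).
  { unfold R1, B1. apply taylor_bound.
    - intros; apply lnp_exd; auto.
    - intros; apply lnp_deriv; auto.
    - exact Hx. }
  assert (HR2 : Rabs (R2 b m x) <= B2 * x ^ S m).
  { unfold R2, B2. apply taylor_bound.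
    - intros; apply hpow_deriv; auto.
    - intros; apply hpow_deriv; auto.
    - exact Hx. }
  set (Rn := Rpower (INR n) (- INR (S m))).
  set (Rbn := Rpower (INR n) (b - INR (S m))).
  set (Rb := Rpower (INR n) b).
  assert (Hxp : x ^ S m = INR j ^ S m * Rn).
  { unfold x, Rn. rewrite Rpower_Ropp, Rpower_pow by lra. unfold Rdiv.
    rewrite Rpow_mult_distr, pow_inv. reflexivity. }
  assert (HRb : Rb * Rn = Rbn).
  { unfold Rb, Rn, Rbn. rewrite <- Rpower_plus. f_equal; ring. }
  assert (HRnb : Rn <= Rbn) by (apply Rpower_mono_exp; lra).
  assert (HRn0 : 0 < Rn) by apply Rpower_pos.
  assert (HRb0 : 0 < Rb) by apply Rpower_pos.
  assert (HJp : INR j ^ S m <= Jm) by (apply pow_incr; lra).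
  assert (HJp0 : 0 < INR j ^ S m) by (apply pow_lt; lra).
  assert (HB1 : 0 <= B1) by (unfold B1; apply Rmult_le_pos; [apply Rabs_pos| left; apply exp_pos]).
  assert (HB2 : 0 <= B2) by (unfold B2; apply Rmult_le_pos; [apply Rabs_pos| left; apply exp_pos]).
  pose proof (Rabs_pos a). pose proof (Rabs_pos c).
  rewrite Hxp in HR1, HR2.
  eapply Rle_trans; [apply Rabs_triang|].
  rewrite !Rabs_mult. rewrite (Rabs_pos_eq Rb) by lra.
  assert (E1 : Rabs a * Rabs (R1 m x) <= Rabs a * B1 * Jm * Rbn).
  { apply Rle_trans with (Rabs a * (B1 * (INR j ^ S m * Rn))); [apply Rmult_le_compat_l; lra|].
    rewrite !Rmult_assoc. apply Rmult_le_compat_l; auto. apply Rmult_le_compat_l; auto.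
    apply Rmult_le_compat; lra. }
  assert (E2 : Rabs c * Rb * Rabs (R2 b m x) <= Rabs c * B2 * Jm * Rbn).
  { apply Rle_trans with (Rabs c * Rb * (B2 * (INR j ^ S m * Rn))).
    { apply Rmult_le_compat_l; [apply Rmult_le_pos; lra| lra]. }
    rewrite <- HRb.
    replace (Rabs c * Rb * (B2 * (INR j ^ S m * Rn))) with (Rabs c * B2 * (INR j ^ S m) * (Rb * Rn)) by ring.
    apply Rmult_le_compat_r; [nra|].
    apply Rmult_le_compat_l; [apply Rmult_le_pos; lra| lra]. }
  lra.
Qed.


Theorem proposition7p1 (a b c : R) (hb0 : 0 < b) (hb2 : b < 2) (hb1 : b <> 1) (hc : c <> 0) :
  (exists N : nat, forall n : nat, (N <= n)%nat -> 0 < delta_sq_abc a b c n) /\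
  (forall m : nat, (2 <= m)%nat ->
     log_polynomial m (alpha_abc a b c) (A_abc a b c) (delta_abc a b c) (kappa_abc a b c)).
Proof.
  assert (Hs : b * (b - 1) * c <> 0).
  { apply Rmult_integral_contrapositive_currified; auto.
    apply Rmult_integral_contrapositive_currified; lra. }
  assert (HD : 0 < Rabs (b * (b - 1) * c) / 4) by (pose proof (Rabs_pos_lt _ Hs); lra).
  assert (Hpos : exists N : nat, forall n : nat, (N <= n)%nat -> 0 < delta_sq_abc a b c n).
  { destruct (ds_lower a b c hb0 Hs) as [N H]. exists N. intros n Hn.
    destruct (H n Hn) as [Hn1 Hd].
    pose proof (Rpower_pos (INR n) (b - 2)). nra. }
  split; [exact Hpos|].
  intros m Hm. unfold log_polynomial.
  split; [exact Hm|].
  split; [apply (kappa_prop a b c Hs)|].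
  split.
  { intros n _. unfold alpha_abc. apply Rmult_lt_0_compat; [apply Rpower_pos|apply exp_pos]. }
  split.
  { destruct Hpos as [N H]. exists N. intros n Hn. unfold delta_abc. apply sqrt_lt_R0. auto. }
  split.
  { intros eps Heps.
    set (K := Rabs a / 2 + Rabs (b * (b - 1) * c) / 2).
    assert (HK : 0 <= K) by (unfold K; pose proof (Rabs_pos a); pose proof (Rabs_pos (b*(b-1)*c)); lra).
    destruct (ev_Rpower (2 - b) (K / eps ^ 2 + 1) ltac:(lra)) as [N2 H2].
    exists (Nat.max 1 N2). intros n Hn.
    specialize (H2 n ltac:(lia)).
    pose proof (ds_upper a b c n ltac:(lia) hb0 Hs) as Hu. fold K in Hu.
    replace (b - 2) with (- (2 - b)) in Hu by ring. rewrite Rpower_Ropp in Hu.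
    set (Rr := Rpower (INR n) (2 - b)) in *.
    assert (HRr : 0 < Rr) by apply Rpower_pos.
    assert (He2 : 0 < eps ^ 2) by (apply pow_lt; lra).
    assert (Hlt : delta_sq_abc a b c n < eps ^ 2).
    { apply Rle_lt_trans with (K * / Rr); auto.
      apply Rmult_lt_reg_r with Rr; auto. rewrite Rmult_assoc, Rinv_l by lra.
      apply Rmult_le_compat_l with (r := eps ^ 2) in H2; [|lra].
      replace (eps ^ 2 * (K / eps ^ 2 + 1)) with (K + eps ^ 2) in H2 by (field; lra).
      lra. }
    unfold delta_abc. rewrite Rabs_pos_eq by apply sqrt_pos.
    destruct (Rle_dec (delta_sq_abc a b c n) 0) as [Hle|Hgt].
    - rewrite sqrt_neg_0 by auto. lra.
    - rewrite <- (sqrt_pow2 eps) by lra. apply sqrt_lt_1; lra. }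
  exists (fun k n => G a b c k n). split.
  - intros k Hk.
    apply (key a b c k _ ((Rabs (a * DL k) + Rabs (c * P k b)) / INR (Factorial.fact k))); auto; [lia|].
    exists 1%nat. intros n Hn. apply G_bound; auto.
  - intros j Hj.
    destruct (resid_bound a b c m hb0) as [C HC].
    apply (key a b c (m + 1) _ C); auto; [lia|].
    destruct (ds_lower a b c hb0 Hs) as [N1 H1].
    exists (Nat.max N1 (m + 1)). intros n Hn.
    destruct (H1 n ltac:(lia)) as [Hn1 Hd].
    assert (0 <= delta_sq_abc a b c n).
    { pose proof (Rpower_pos (INR n) (b - 2)). nra. }
    cbv beta. rewrite resid_eq by auto. apply HC; lia.
Qed.
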